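(* Let $\Lambda$ be a finitely aligned left cancellative small category. (1) Suppose $s=\bigcup_{i=1}^n\alpha_i\beta_i^*\in S_\Lambda$ with $\alpha_i,\beta_i\in\Lambda$, and suppose $e$ is an idempotent of $S_\Lambda$ with $e\leqslant a^*a$ where $a=\alpha_j\beta_j^*$ for some $1\le j\le n$. Then $ses^*=aea^*$. (2) If $\xi\subseteq E(S_\Lambda)$ is a tight filter, $\alpha_1,\dots,\alpha_n\in S_\Lambda$, and $\bigcup_{i=1}^n\alpha_i\alpha_i^*\in\xi$, then $\alpha_j\alpha_j^*\in\xi$ for some $1\le j\le n$.
   Context: A small category $\Lambda$ (objects $\Lambda^0$, range $r$, source $s$, composition $\alpha\beta$ when $s(\alpha)=r(\beta)$) is left cancellative if $\alpha\beta=\alpha\gamma$ implies $\beta=\gamma$. Write $\alpha\Lambda=\{\alpha\beta:s(\alpha)=r(\beta)\}$. $\Lambda$ is finitely aligned if for all $\alpha,\beta$ there is a finite (possibly empty) $F\subseteq\Lambda$ with $\alpha\Lambda\cap\beta\Lambda=\bigcup_{f\in F}f\Lambda$. Each $\alpha\in\Lambda$ is regarded as the partial bijection $s(\alpha)\Lambda\to\alpha\Lambda$, $\beta\mapsto\alpha\beta$, in the symmetric inverse monoid $\mathcal{I}(\Lambda)$ (partial bijections of $\Lambda$ under composition on the largest possible domain, with zero the empty map); $\alpha^*$ is its inverse $\alpha\beta\mapsto\beta$. $S_\Lambda$ is the inverse subsemigroup of $\mathcal{I}(\Lambda)$ generated by $\{\alpha:\alpha\in\Lambda\}$, and $E(S_\Lambda)$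 its idempotents (identity maps on subsets); products like $\alpha\beta^*$ denote composition, and unions are unions of partial maps (graphs). The order on idempotents is $e\leqslant f$ iff $ef=e$. A filter is a nonempty proper subset of $E(S_\Lambda)$ closed under products and upward closed; a tight filter is a filter in the closure (in $\{0,1\}^{E(S_\Lambda)}$) of the set of maximal filters. *)

(* Defs.v *)
From Stdlib Require Import List Arith.
Import ListNotations.
Set Implicit Arguments.

(** A small category: a type of objects, a type of morphisms, range [rg],
    source [sc], identities, and a composition [cmp a b] (= ab) which is
    meaningful only when [sc a = rg b] (its value otherwise is irrelevant). *)
Record SmallCat := {
  Obj : Type;
  Mor : Type;
  rg : Mor -> Obj;
  sc : Mor -> Obj;
  idm : Obj -> Mor;
  cmp : Mor -> Mor -> Mor;
  rg_idm : forall o, rg (idm o) = o;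
  sc_idm : forall o, sc (idm o) = o;
  rg_cmp : forall a b, sc a = rg b -> rg (cmp a b) = rg a;
  sc_cmp : forall a b, sc a = rg b -> sc (cmp a b) = sc b;
  idm_l : forall a, cmp (idm (rg a)) a = a;
  idm_r : forall a, cmp a (idm (sc a)) = a;
  cmp_assoc : forall a b c, sc a = rg b -> sc b = rg c ->
      cmp (cmp a b) c = cmp a (cmp b c)
}.

Section Defs.
Variable C : SmallCat.

Definition inRight (a x : Mor C) : Prop :=
  exists y, sc C a = rg C y /\ x = cmp C a y.

Definition left_cancellative : Prop :=
  forall a b c, sc C a = rg C b -> sc C a = rg C c ->
    cmp C a b = cmp C a c -> b = c.

Definition finitely_aligned : Prop :=
  forall a b, exists F : list (Mor C),
    forall x, (inRight a x /\ inRight b x) <-> exists f, In f F /\ inRight f x.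

(** Partial maps of Λ, represented by their graphs: [f x y] means f(x) = y. *)
Definition pmap := Mor C -> Mor C -> Prop.

(** composition [pcomp f g] = f g (first g, then f), on the largest domain *)
Definition pcomp (f g : pmap) : pmap := fun x z => exists y, g x y /\ f y z.

Definition pinv (f : pmap) : pmap := fun x y => f y x.

Definition punion (n : nat) (f : nat -> pmap) : pmap :=
  fun x y => exists i, i < n /\ f i x y.

(** α as the partial bijection s(α)Λ -> αΛ, β ↦ αβ *)
Definition mor_map (a : Mor C) : pmap :=
  fun x y => sc C a = rg C x /\ y = cmp C a x.

Inductive inS : pmap -> Prop :=
| inS_gen a : inS (mor_map a)
| inS_comp f g : inS f -> inS g -> inS (pcomp f g)
| inS_inv f : inS f -> inS (pinv f).

Definition isE (e : pmap) : Prop := inS e /\ pcomp e e = e.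

Definition leqE (e f : pmap) : Prop := pcomp e f = e.

Definition is_filter (xi : pmap -> Prop) : Prop :=
  (forall e, xi e -> isE e) /\
  (exists e, xi e) /\
  (exists e, isE e /\ ~ xi e) /\
  (forall e f, xi e -> xi f -> xi (pcomp e f)) /\
  (forall e f, xi e -> isE f -> leqE e f -> xi f).

Definition is_max_filter (xi : pmap -> Prop) : Prop :=
  is_filter xi /\
  forall eta, is_filter eta -> (forall e, xi e -> eta e) -> forall e, eta e -> xi e.

(** tight filter: a filter lying in the closure, in the product topology of
    {0,1}^{E(S_Λ)}, of the set of maximal filters; i.e. every basic open
    neighbourhood {η | X ⊆ η, Y ∩ η = ∅} (X, Y finite subsets of E(S_Λ))
    of ξ contains a maximal filter. *)
Definition is_tight_filter (xi : pmap -> Prop) : Prop :=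
  is_filter xi /\
  forall X Y : list pmap,
    (forall e, In e X -> xi e) ->
    (forall e, In e Y -> isE e /\ ~ xi e) ->
    exists eta, is_max_filter eta /\
      (forall e, In e X -> eta e) /\ (forall e, In e Y -> ~ eta e).

End Defs.

Arguments inRight {C}. Arguments pcomp {C}. Arguments pinv {C}.
Arguments punion {C}. Arguments mor_map {C}. Arguments inS {C}.
Arguments isE {C}. Arguments leqE {C}. Arguments is_filter {C}.
Arguments is_max_filter {C}. Arguments is_tight_filter {C}.

(* Main.v *)
Require Import Defs.
From Stdlib Require Import List Arith.
From Stdlib Require Import Classical FunctionalExtensionality PropExtensionality Lia.
Import ListNotations.

Section Aux.
Variable C : SmallCat.

Lemma pext (f g : pmap C) : (forall x y, f x y <-> g x y) -> f = g.
Proof.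
  intro H. apply functional_extensionality; intro x.
  apply functional_extensionality; intro y. apply propositional_extensionality. apply H.
Qed.

Definition Fun (f : pmap C) := forall x y y', f x y -> f x y' -> y = y'.
Definition Inj (f : pmap C) := forall x x' y, f x y -> f x' y -> x = x'.
Definition Diag (f : pmap C) := forall x y, f x y -> x = y.

Lemma inS_fi : left_cancellative C -> forall {f}, inS f -> Fun f /\ Inj f.
Proof.
  intros LC f H; induction H as [a|f g _ [Ff If] _ [Fg Ig]|f _ [Ff If]].
  - split.
    + intros x y y' [_ ->] [_ ->]; reflexivity.
    + intros x x' y [h1 e1] [h2 e2]. subst y. apply (LC a); auto.
  - split.
    + intros x y y' [z [h1 h2]] [z' [h3 h4]].
      assert (z = z') by (eapply Fg; eauto). subst z'. eapply Ff; eauto.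
    + intros x x' y [z [h1 h2]] [z' [h3 h4]].
      assert (z = z') by (eapply If; eauto). subst z'. eapply Ig; eauto.
  - split.
    + intros x y y' h1 h2. eapply If; eauto.
    + intros x x' y h1 h2. eapply Ff; eauto.
Qed.

Lemma isE_diag : left_cancellative C -> forall {e}, isE e -> Diag e.
Proof.
  intros LC e [He Hid] x y Hxy.
  destruct (inS_fi LC He) as [Fe Ie].
  assert (Hc : pcomp e e x y) by (rewrite Hid; exact Hxy).
  destruct Hc as [z [h1 h2]].
  assert (z = y) by (eapply Fe; eauto). subst z.
  eapply Ie; eauto.
Qed.

Lemma diag_idem (d : pmap C) : Diag d -> pcomp d d = d.
Proof.
  intro D. apply pext; intros x y; split.
  - intros [z [h1 h2]]. pose proof (D _ _ h1). subst z. exact h2.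
  - intro h. exists x. pose proof (D _ _ h). subst y. auto.
Qed.

Lemma diag_comp (e f : pmap C) : Diag e -> Diag f -> Diag (pcomp e f).
Proof.
  intros De Df x y [z [h1 h2]]. rewrite (Df _ _ h1). apply (De _ _ h2).
Qed.

Lemma diag_comp_char (e f : pmap C) x : Diag e -> Diag f ->
  pcomp e f x x <-> (e x x /\ f x x).
Proof.
  intros De Df; split.
  - intros [z [h1 h2]]. pose proof (Df _ _ h1). subst z. auto.
  - intros [h1 h2]. exists x. auto.
Qed.

Lemma leq_diag (e g : pmap C) x : Diag e -> leqE e g -> e x x -> g x x.
Proof.
  intros De L h. rewrite <- L in h. destruct h as [y [h1 h2]].
  pose proof (De _ _ h2). subst y. exact h1.
Qed.

Lemma diag_leq (e g : pmap C) : Diag e -> Diag g -> (forall x, e x x -> g x x) -> leqE e g.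
Proof.
  intros De Dg H. unfold leqE. apply pext; intros x z; split.
  - intros [y [h1 h2]]. pose proof (Dg _ _ h1). subst y. exact h2.
  - intro h. pose proof (De _ _ h). subst z. exists x. auto.
Qed.

Lemma isE_comp : left_cancellative C -> forall e f : pmap C, isE e -> isE f -> isE (pcomp e f).
Proof.
  intros LC e f He Hf. split.
  - apply inS_comp; [apply He|apply Hf].
  - apply diag_idem, diag_comp; apply isE_diag; auto.
Qed.

Lemma isE_aa : left_cancellative C -> forall a : pmap C, inS a -> isE (pcomp a (pinv a)).
Proof.
  intros LC a Ha. destruct (inS_fi LC Ha) as [Fa Ia].
  assert (D : Diag (pcomp a (pinv a))).
  { intros x y [z [h1 h2]]. eapply Fa; eauto. }
  split.
  - apply inS_comp; [|apply inS_inv]; exact Ha.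
  - apply diag_idem, D.
Qed.

End Aux.
Arguments inS_fi {C} LC {f}.
Arguments isE_diag {C} LC {e}.
Arguments isE_comp {C} LC e f.
Arguments isE_aa {C} LC a.
Arguments diag_comp_char {C} e f x.
Arguments leq_diag {C} e g x.
Arguments diag_leq {C} e g.
Arguments diag_comp {C} e f.

Theorem lemma4p2 (C : SmallCat) :
  left_cancellative C -> finitely_aligned C ->
  (forall (n : nat) (alpha beta : nat -> Mor C) (j : nat) (e : pmap C),
     let s := punion n (fun i => pcomp (mor_map (alpha i)) (pinv (mor_map (beta i)))) in
     let a := pcomp (mor_map (alpha j)) (pinv (mor_map (beta j))) in
     inS s -> j < n -> isE e -> leqE e (pcomp (pinv a) a) ->
     pcomp (pcomp s e) (pinv s) = pcomp (pcomp a e) (pinv a))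
  /\
  (forall (xi : pmap C -> Prop) (n : nat) (alpha : nat -> pmap C),
     is_tight_filter xi ->
     (forall i, i < n -> inS (alpha i)) ->
     xi (punion n (fun i => pcomp (alpha i) (pinv (alpha i)))) ->
     exists j, j < n /\ xi (pcomp (alpha j) (pinv (alpha j)))).
Proof.
  intros LC FA. split.
  - intros n alpha beta j e s a Hs Hj HE Hle.
    pose proof (isE_diag LC HE) as De.
    destruct (inS_fi LC Hs) as [Fs _].
    assert (Sub : forall z t, a z t -> s z t).
    { intros z t h. exists j. split; [exact Hj| exact h]. }
    assert (Key : forall z t, e z z -> s z t -> a z t).
    { intros z t hz hs. rewrite <- Hle in hz. destruct hz as [y [[u [h1 h2]] _]].
      assert (t = u) by (eapply Fs; [exact hs| apply Sub; exact h1]). subst u. exact h1. }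
    apply pext; intros x y; split.
    + intros [z [h1 [w [h2 h3]]]]. pose proof (De _ _ h2). subst w.
      pose proof h2 as h2'.
      exists z. split; [apply Key; auto|]. exists z. split; [auto|apply Key; auto].
    + intros [z [h1 [w [h2 h3]]]]. pose proof (De _ _ h2). subst w.
      exists z. split; [apply Sub; auto|]. exists z. split; [auto|apply Sub; auto].
  - intros xi n alpha [Fxi Tight] Hal Hu.
    set (f := fun i => pcomp (alpha i) (pinv (alpha i))) in *.
    set (u := punion n f) in *.
    apply NNPP; intro Hno.
    assert (Hnf : forall j, j < n -> ~ xi (f j)) by (intros j hj hx; apply Hno; eauto).
    assert (HEf : forall j, j < n -> isE (f j)) by (intros; apply isE_aa; auto).
    destruct (Tight [u] (map f (seq 0 n))) as [eta [[Feta Meta] [HX HY]]].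
    + intros e' [<-|[]]. exact Hu.
    + intros e' He'. apply in_map_iff in He'. destruct He' as [j [<- Hj]].
      apply in_seq in Hj. split; [apply HEf|apply Hnf]; lia.
    + assert (Hetau : eta u) by (apply HX; left; auto).
      assert (Hetaf : forall j, j < n -> ~ eta (f j)).
      { intros j hj. apply HY. apply in_map_iff. exists j. split; auto. apply in_seq. lia. }
      destruct Feta as [EE [[h0 Hh0] [[k [Hk Hnk]] [Prod Up]]]].
      assert (GE : forall j, j < n -> forall g, isE g ->
                exists h, eta h /\ forall x, f j x x -> h x x -> g x x).
      { intros j hj g Hg. apply NNPP; intro Hng.
        set (G := fun g => isE g /\ exists h, eta h /\ forall x, f j x x -> h x x -> g x x).
        assert (FG : is_filter G).
        { split; [|split; [|split; [|split]]].
          - intros e' [H _]; exact H.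
          - exists h0. split; [apply EE; auto|]. exists h0. auto.
          - exists g. split; auto. intros [_ Hx]. apply Hng. exact Hx.
          - intros e1 e2 [He1 [h1 [Hh1 K1]]] [He2 [h2 [Hh2 K2]]].
            split; [apply isE_comp; auto|].
            exists (pcomp h1 h2). split; [apply Prod; auto|].
            intros x hf hh.
            apply diag_comp_char in hh; try (apply isE_diag; auto; apply EE; auto).
            apply diag_comp_char; try (apply isE_diag; auto).
            destruct hh; auto.
          - intros e1 e2 [He1 [h1 [Hh1 K1]]] He2 L. split; auto.
            exists h1. split; auto. intros x a b.
            eapply leq_diag; eauto. apply isE_diag; auto. }
        assert (Hsub : forall e', eta e' -> G e').
        { intros e' He'. split; [apply EE; auto|]. exists e'. auto. }
        apply (Hetaf j hj). apply (Meta G FG Hsub).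
        split; [apply HEf; auto|]. exists h0. auto. }
      assert (Ind : forall m, m <= n -> exists h, eta h /\
                 forall j x, j < m -> f j x x -> h x x -> k x x).
      { induction m as [|m IH]; intro hm.
        - exists u. split; auto. intros; lia.
        - destruct (IH ltac:(lia)) as [h [Hh K]].
          destruct (GE m ltac:(lia) k Hk) as [hm' [Hhm Km]].
          exists (pcomp h hm'). split; [apply Prod; auto|].
          intros j x hj hf hh.
          apply diag_comp_char in hh; try (apply isE_diag; auto; apply EE; auto).
          destruct hh as [hh1 hh2].
          destruct (Nat.eq_dec j m) as [->|ne]; [apply Km; auto|].
          apply (K j); auto; lia. }
      destruct (Ind n (le_n n)) as [h [Hh K]].
      apply Hnk. apply (Up (pcomp u h)); [apply Prod; auto|exact Hk|].
      * assert (Du : Diag C u) by (apply (isE_diag LC); apply EE; auto).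
        assert (Dh : Diag C h) by (apply (isE_diag LC); apply EE; auto).
        apply (diag_leq (pcomp u h) k).
        -- apply diag_comp; auto.
        -- apply (isE_diag LC); auto.
        -- intros x hx. apply (diag_comp_char u h x Du Dh) in hx.
           destruct hx as [[i [hi hfi]] hhx]. apply (K i); auto.
Qed.
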